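(* Let $X=(X_1,X_2)$ be a two-good random valuation with $X_1,X_2$ independent. Then \[ \textsc{Rev}(X_1,X_2)\le\Big(\sqrt{\textsc{Rev}(X_1)}+\sqrt{\textsc{Rev}(X_2)}\Big)^2 . \]
   Context: A two-good random valuation is a random vector in $\mathbb{R}_+^2$. A mechanism is a pair $\mu=(q,s)$ of Borel functions $q:\mathbb{R}_+^2\to[0,1]^2$, $s:\mathbb{R}_+^2\to\mathbb{R}$, with buyer payoff $b(x)=q(x)\cdot x-s(x)$; IR: $b(x)\ge0$ for all $x$; IC: $b(x)\ge q(\tilde x)\cdot x-s(\tilde x)$ for all $x,\tilde x$. $\textsc{Rev}(X)=\sup\mathbb{E}[s(X)]$ over all IC and IR mechanisms; for one good, $\textsc{Rev}(X_i)=\sup_{p\ge0}p\,\mathbb{P}[X_i\ge p]$. *)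

(* Defs.v *)
From HB Require Import structures.
From mathcomp Require Import all_boot all_order all_algebra.
From mathcomp Require Import all_classical all_reals all_analysis.
Set Implicit Arguments. Unset Strict Implicit. Unset Printing Implicit Defensive.
Import Order.TTheory GRing.Theory Num.Theory.
Local Open Scope classical_set_scope.
Local Open Scope ring_scope.

Definition indep2 (R : realType) (d : measure_display) (T : measurableType d)
  (P : probability T R) (X1 X2 : T -> R) : Prop :=
  forall A B : set R, measurable A -> measurable B ->
    P (X1 @^-1` A `&` X2 @^-1` B) = (P (X1 @^-1` A) * P (X2 @^-1` B))%E.

Definition nonneg2 (R : realType) (x : R * R) : Prop := 0 <= x.1 /\ 0 <= x.2.

(* a (Borel) mechanism mu = (q, s) with q = (q1, q2) : R_+^2 -> [0,1]^2,
   s : R_+^2 -> R; buyer payoff b(x) = q(x).x - s(x) *)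
Definition payoff (R : realType) (q1 q2 s : R * R -> R) (y x : R * R) : R :=
  q1 y * x.1 + q2 y * x.2 - s y.

Definition IC_IR_mechanism (R : realType) (q1 q2 s : R * R -> R) : Prop :=
  [/\ (measurable_fun setT q1 /\ measurable_fun setT q2 /\ measurable_fun setT s),
      (forall x, nonneg2 x -> 0 <= q1 x <= 1 /\ 0 <= q2 x <= 1),
      (forall x, nonneg2 x -> 0 <= payoff q1 q2 s x x) &
      (forall x y, nonneg2 x -> nonneg2 y ->
                  payoff q1 q2 s y x <= payoff q1 q2 s x x)].

Definition Rev2 (R : realType) (d : measure_display) (T : measurableType d)
  (P : probability T R) (X1 X2 : T -> R) : \bar R :=
  ereal_sup [set r | exists q1 q2 s, IC_IR_mechanism q1 q2 s /\
     r = (\int[P]_w (s (X1 w, X2 w))%:E)%E].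

Definition Rev1 (R : realType) (d : measure_display) (T : measurableType d)
  (P : probability T R) (Y : T -> R) : \bar R :=
  ereal_sup [set r | exists p : R, 0 <= p /\
     r = (p%:E * P [set w | (p <= Y w)%R])%E].

Definition esqrt (R : realType) (x : \bar R) : \bar R :=
  match x with
  | r%:E => (Num.sqrt r)%:E
  | +oo%E => +oo%E
  | -oo%E => 0%E
  end.

(* Main.v *)
Require Import Defs.
From HB Require Import structures.
From mathcomp Require Import all_boot all_order all_algebra.
From mathcomp Require Import all_classical all_reals all_analysis.
From mathcomp Require Import measurable_realfun.
From mathcomp Require Import ring lra.
Set Implicit Arguments. Unset Strict Implicit.
Import Order.TTheory GRing.Theory Num.Theory.
Local Open Scope classical_set_scope.
Local Open Scope ring_scope.

Lemma indep_fubini (R : realType) (d : measure_display) (T : measurableType d)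
  (P : probability T R) (X1 X2 : {mfun T >-> R})
  (indep : indep2 P X1 X2) (h : R * R -> \bar R)
  (mh : measurable_fun setT h) (h0 : forall x, (0 <= h x)%E) :
  (\int[P]_w h (X1 w, X2 w) =
   \int[distribution P X2]_y \int[P]_w h (X1 w, y))%E.
Proof.
have mXY : measurable_fun setT (fun w => (X1 w, X2 w)).
  by apply/measurable_fun_pairP; split.
pose XY : {mfun T >-> (R * R)%type} := HB.pack (fun w => (X1 w, X2 w))
  (isMeasurableFun.Build _ _ _ _ (fun w => (X1 w, X2 w)) mXY).
have -> : (\int[P]_w h (X1 w, X2 w) = \int[distribution P XY]_z h z)%E.
  by rewrite ge0_integral_distribution.
rewrite (eq_measure_integral (distribution P X1 \x distribution P X2)%E); last first.
  move=> A mA _; apply/esym; apply: product_measure_unique => //.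
rewrite fubini_tonelli2 //.
apply: eq_integral => y _; rewrite /fubini_G.
rewrite ge0_integral_distribution //.
exact: measurable_fun_pair1.
Qed.

Definition Pinv (R : realType) (Q : R -> R) (u : R) : R :=
  inf [set y | 0 <= y /\ u < Q y].


Lemma Pinv_ge0 (R : realType) (Q : R -> R) u : 0 <= Pinv Q u.
Proof.
rewrite /Pinv; have [ne|e] := pselect ([set y | 0 <= y /\ u < Q y] !=set0).
  by apply: lb_le_inf => // y [].
have -> : [set y | 0 <= y /\ u < Q y] = set0.
  by apply/seteqP; split => // y Sy; apply: e; exists y.
by rewrite inf0.
Qed.

Lemma Pinv_le (R : realType) (Q : R -> R) u z : 0 <= z -> u < Q z -> Pinv Q u <= z.
Proof.
move=> z0 uz; apply: ge_inf; first by exists 0 => y [].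
by [].
Qed.

Lemma Pinv_lb (R : realType) (Q : R -> R) u y :
  (forall w, 0 <= w -> u < Q w -> y <= w) -> (exists w, 0 <= w /\ u < Q w) ->
  y <= Pinv Q u.
Proof. by move=> H [w wH]; apply: lb_le_inf; [exists w|move=> v [] /H]. Qed.

Lemma Pinv_measurable (R : realType) (Q : R -> R) :
  measurable_fun setT (Pinv Q).
Proof.
apply: (measurability (@RGenCInfty.G R)) => [|/= _ [_] [r] -> <-].
  exact: RGenCInfty.measurableE.
apply: measurableI => //; apply: is_interval_measurable => s t /=.
rewrite !in_itv/= !andbT => fs ft u /andP[su ut]; rewrite in_itv/= andbT.
have [ne|e] := pselect ([set y | 0 <= y /\ u < Q y] !=set0).
  apply: (le_trans fs); apply: lb_le_inf => // y [y0 uy].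
  apply: Pinv_le => //; exact: le_lt_trans uy.
have Eu : [set y | 0 <= y /\ u < Q y] = set0.
  by apply/seteqP; split => // y Sy; apply: e; exists y.
have Et : [set y | 0 <= y /\ t < Q y] = set0.
  apply/seteqP; split => // y [y0 ty]; apply: e; exists y; split => //.
  exact: le_lt_trans ty.
by move: ft; rewrite /Pinv Et Eu.
Qed.


Lemma Qmono (R : realType) (Q t : R -> R)
  (IC : forall y z, 0 <= y -> 0 <= z -> (Q y * z - t y <= Q z * z - t z)%R)
  y w : (0 <= y)%R -> (y <= w)%R -> (Q y <= Q w)%R.
Proof.
move=> y0 yw; have w0 : (0 <= w)%R by apply: le_trans yw.
have h1 := IC y w y0 w0; have h2 := IC w y w0 y0.
rewrite le_eqVlt in yw; case/orP: yw => [/eqP -> //|yw].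
have : (0 <= (Q w - Q y) * (w - y))%R by lra.
rewrite pmulr_lge0 ?subr_gt0 // subr_ge0 //.
Qed.

Definition Gint (R : realType) (Q : R -> R) (z : R) : \bar R :=
  \int[lebesgue_measure]_(u in `[0, Q z[%classic) (Pinv Q u)%:E.


Lemma int_itv_ge (R : realType) (Q : R -> R) (a b c : R) :
  (0 <= c)%R -> (a <= b)%R ->
  (forall u, (a <= u)%R -> (u < b)%R -> (c <= Pinv Q u)%R) ->
  ((c * (b - a))%:E <= \int[lebesgue_measure]_(u in `[a, b[%classic) (Pinv Q u)%:E)%E.
Proof.
move=> c0 ab H.
have -> : (c * (b - a))%:E = (\int[lebesgue_measure]_(u in `[a, b[%classic) (cst c%:E u))%E.
  rewrite integral_cst //= lebesgue_measure_itv /= lte_fin.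
  case: ltgtP ab => // -> _.
  by rewrite subrr mulr0 mule0.
eapply ge0_le_integral.
- done.
- by move=> u _ /=; rewrite lee_fin.
- exact: measurable_cst.
- apply/measurable_EFinP; apply: measurable_funTS; exact: Pinv_measurable.
- move=> u /=; rewrite in_itv /= => /andP[au ub]; rewrite lee_fin; exact: H.
Qed.

Lemma int_itv_le (R : realType) (Q : R -> R) (a b c : R) :
  (0 <= a)%R ->
  (forall u, (a <= u)%R -> (u < b)%R -> (Pinv Q u <= c)%R) ->
  (\int[lebesgue_measure]_(u in `[a, b[%classic) (Pinv Q u)%:E <=
  \int[lebesgue_measure]_(u in `[a, b[%classic) (cst c%:E u))%E.
Proof.
move=> a0 H; eapply ge0_le_integral.
- done.
- by move=> u _; rewrite lee_fin Pinv_ge0.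
- apply/measurable_EFinP; apply: measurable_funTS; exact: Pinv_measurable.
- exact: measurable_cst.
- move=> u /=; rewrite in_itv /= => /andP[au ub]; rewrite lee_fin; exact: H.
Qed.


Definition mech1 (R : realType) (Q t : R -> R) : Prop :=
  [/\ (forall z, 0 <= z -> 0 <= Q z <= 1),
      (forall z, 0 <= z -> 0 <= Q z * z - t z) &
      (forall y z, 0 <= y -> 0 <= z -> Q y * z - t y <= Q z * z - t z)].


Lemma G_split (R : realType) (Q t : R -> R) (M : mech1 Q t) y w :
  0 <= y -> y <= w ->
  Gint Q w = (Gint Q y +
     \int[lebesgue_measure]_(u in `[Q y, Q w[%classic) (Pinv Q u)%:E)%E.
Proof.
case: M => Q01 _ IC y0 yw; have w0 : 0 <= w by apply: le_trans yw.
have Qyw := Qmono IC y0 yw.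
have /andP[Qy0 _] := Q01 _ y0.
rewrite /Gint.
have -> : `[0, Q w[%classic = `[0, Q y[%classic `|` `[Q y, Q w[%classic.
  apply/seteqP; split => u /=; rewrite !in_itv /=.
    move=> /andP[u0 uw]; have [uy|uy] := ltP u (Q y); [left|right];
      by apply/andP; split.
  case=> /andP[a b]; apply/andP; split => //.
    exact: lt_le_trans Qyw.
  exact: le_trans a.
rewrite ge0_integral_setU //.
- apply/measurable_EFinP; apply: measurable_funTS; exact: Pinv_measurable.
- by move=> u _; rewrite lee_fin Pinv_ge0.
- apply/eqP/seteqP; split => // u [] /=; rewrite !in_itv /=.
  move=> /andP[_ a] /andP[b _]; have := lt_le_trans a b; by rewrite ltxx.
Qed.

Lemma G_ge0 (R : realType) (Q : R -> R) z : (0 <= Gint Q z)%E.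
Proof. by apply: integral_ge0 => u _; rewrite lee_fin Pinv_ge0. Qed.

Lemma G_fin (R : realType) (Q t : R -> R) (M : mech1 Q t) z :
  0 <= z -> Gint Q z \is a fin_num.
Proof.
case: M => Q01 _ _ z0; have /andP[Qz0 _] := Q01 _ z0.
rewrite ge0_fin_numE ?G_ge0 //.
apply: (le_lt_trans (int_itv_le (c := z) _ _)) => //.
- by move=> u _ uz; apply: Pinv_le.
- rewrite integral_cst //= lebesgue_measure_itv /=.
  case: ifP => _; last by rewrite mule0 ltry.
  by rewrite -EFinB -EFinM ltry.
Qed.


Lemma G_step (R : realType) (Q t : R -> R) (M : mech1 Q t) y w :
  0 <= y -> y <= w ->
  t w - t y <= fine (Gint Q w) - fine (Gint Q y) + (Q w - Q y) * (w - y).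
Proof.
move=> y0 yw; have w0 : 0 <= w by apply: le_trans yw.
have M' := M; case: M' => Q01 IR IC.
have Qyw := Qmono IC y0 yw.
have /andP[Qy0 _] := Q01 _ y0.
have key : y * (Q w - Q y) <= fine (Gint Q w) - fine (Gint Q y).
  have : ((fine (Gint Q y) + y * (Q w - Q y))%:E <= (fine (Gint Q w))%:E)%E.
    rewrite fineK ?(G_fin M) // (G_split M y0 yw) EFinD fineK ?(G_fin M) //.
    apply: leeD2l; apply: int_itv_ge => // u yu uw.
    apply: Pinv_lb; last by exists w.
    move=> v v0 uv; rewrite leNgt; apply/negP => vy.
    have := Qmono IC v0 (ltW vy); lra.
  rewrite lee_fin; lra.
have := IC y w y0 w0; nra.
Qed.

Lemma G_chain (R : realType) (Q t : R -> R) (M : mech1 Q t) z (m : nat) :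
  0 <= z -> forall k, (k <= m.+1)%N ->
  t (k%:R * (z / m.+1%:R)) - t 0 <= fine (Gint Q (k%:R * (z / m.+1%:R))) - fine (Gint Q 0)
                        + (z / m.+1%:R) * (Q (k%:R * (z / m.+1%:R)) - Q 0).
Proof.
move=> z0; set h := z / m.+1%:R; elim=> [_|k IH km].
  by rewrite mul0r !subrr mulr0 addr0.
have h0 : 0 <= h by rewrite /h divr_ge0.
have IH' := IH (ltnW km).
have y0 : 0 <= k%:R * h by rewrite mulr_ge0.
have e : k.+1%:R * h = k%:R * h + h by rewrite -addn1 natrD mulrDl mul1r.
have := G_step M y0 (_ : k%:R * h <= k.+1%:R * h); rewrite e.
move=> /(_ ltac:(rewrite lerDl //)).
have -> : k%:R * h + h - k%:R * h = h by rewrite addrC addKr.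
lra.
Qed.

Lemma G_point (R : realType) (Q t : R -> R) (M : mech1 Q t) z :
  0 <= z -> ((Num.max (t z) 0)%:E <= Gint Q z)%E.
Proof.
move=> z0; have M' := M; case: M' => Q01 IR IC.
have gz0 : 0 <= fine (Gint Q z) by apply: fine_ge0; exact: G_ge0.
suff tz : t z <= fine (Gint Q z).
  by rewrite -(fineK (G_fin M z0)) lee_fin ge_max tz gz0.
apply/ler_addgt0Pr => e e0.
set m := Num.trunc (z / e).
have := G_chain M (m:=m) z0 (leqnn m.+1).
have Hm : m.+1%:R * (z / m.+1%:R) = z by rewrite mulrC divfK // pnatr_eq0.
rewrite Hm => ch.
have hlt : z / m.+1%:R < e.
  have := truncnS_gt (z / e); rewrite -/m ltr_pdivrMr // => H.
  by rewrite ltr_pdivrMr // mulrC.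
have h0 : 0 <= z / m.+1%:R by rewrite divr_ge0.
have t0 : t 0 <= 0 by have := IR 0 (lexx 0); lra.
have g0 : 0 <= fine (Gint Q 0) by apply: fine_ge0; exact: G_ge0.
have Q0z := Qmono IC (lexx 0) z0.
have /andP[_ Qz1] := Q01 z z0.
have /andP[Q00 _] := Q01 0 (lexx 0).
have hb : z / m.+1%:R * (Q z - Q 0) <= z / m.+1%:R.
  rewrite ler_piMr //; lra.
move: ch hb hlt; set h := z / m.+1%:R; set D := h * (Q z - Q 0) => ch hb hlt.
lra.
Qed.


Lemma Rev1_ge0 (R : realType) (d : measure_display) (T : measurableType d)
  (P : probability T R) (Y : T -> R) : (0 <= Rev1 P Y)%E.
Proof.
apply: ereal_sup_ubound; exists 0; split => //; by rewrite mul0e.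
Qed.

Lemma Rev1_ub (R : realType) (d : measure_display) (T : measurableType d)
  (P : probability T R) (Y : T -> R) p : 0 <= p ->
  (p%:E * P [set w | (p <= Y w)%R] <= Rev1 P Y)%E.
Proof. by move=> p0; apply: ereal_sup_ubound; exists p. Qed.

Lemma one_dim (R : realType) (d : measure_display) (T : measurableType d)
  (P : probability T R) (X1 : {mfun T >-> R}) (X1ge0 : forall w, 0 <= X1 w)
  (Q t : R -> R) (mQ : measurable_fun setT Q) (mt : measurable_fun setT t)
  (M : mech1 Q t) :
  (\int[P]_w (Num.max (t (X1 w)) 0)%:E <= Rev1 P X1)%E.
Proof.
have M' := M; case: M' => Q01 IR IC.
have mQX : measurable_fun setT (Q \o X1) by apply: measurableT_comp.
pose E := [set p : T * R | 0 <= p.2 /\ p.2 < Q (X1 p.1)].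
have mE : measurable E.
  have -> : E = (snd @^-1` `[0, +oo[) `&` ((fun p : T * R => p.2 < Q (X1 p.1)) @^-1` [set true]).
    apply/seteqP; split => p /=.
      by case=> a b; split => //; rewrite in_itv /= a.
    by rewrite in_itv /= andbT; case=> a b.
  apply: measurableI.
    rewrite -[X in measurable X]setTI; apply: (measurable_snd measurableT).
    exact: measurable_itv.
  rewrite -[X in measurable X]setTI; apply: (@measurable_fun_ltr _ _ _ setT (fun p : T * R => p.2) (fun p => Q (X1 p.1)) _ _ measurableT) => //.
    exact: measurable_snd.
  exact: measurableT_comp mQX measurable_fst.
pose f := fun p : T * R => ((Pinv Q p.2) * \1_E p)%:E.
have mf : measurable_fun setT f.
  apply/measurable_EFinP; apply: measurable_funM.
    exact: measurableT_comp (Pinv_measurable Q) measurable_snd.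
  exact: measurable_indic.
have f0 : forall p, (0 <= f p)%E.
  by move=> p; rewrite lee_fin mulr_ge0 ?Pinv_ge0.
have step1 : (\int[P]_w (Num.max (t (X1 w)) 0)%:E <=
    \int[P]_w (\int[lebesgue_measure]_u f (w, u)))%E.
  apply: ge0_le_integral => //.
  - by move=> w _; rewrite lee_fin le_max lexx orbT.
  - apply/measurable_EFinP; apply: measurable_maxr.
      exact: measurableT_comp.
    exact: measurable_cst.
  - exact: (measurable_fun_fubini_tonelli_F (m2 := lebesgue_measure) f mf f0).
  - move=> w _; rewrite (le_trans (G_point M (X1ge0 w))) // le_eqVlt; apply/orP; left; apply/eqP.
    rewrite /Gint integral_mkcond; apply: eq_integral => u _.
    rewrite /f /patch /= indicE.
    have -> : ((w, u) \in E) = (u \in `[0, Q (X1 w)[%classic).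
      apply/idP/idP => /set_mem H; apply/mem_set; move: H; rewrite /E /= in_itv /=.
        by case=> -> ->.
      by case/andP=> -> ->.
    by case: ifPn => _; rewrite ?mulr1 ?mulr0.
apply: (le_trans step1).
rewrite (fubini_tonelli (m1 := P) (m2 := lebesgue_measure) f mf f0).
have step3 : (\int[lebesgue_measure]_u \int[P]_w f (w, u) <=
    \int[lebesgue_measure]_u (Rev1 P X1 * (\1_(`[0, 1[%classic) u)%:E))%E.
  apply: ge0_le_integral => //.
  - by move=> u _; apply: integral_ge0 => w _; exact: f0.
  - exact: (measurable_fun_fubini_tonelli_G (m1 := P) f mf f0).
  - apply: emeasurable_funM; first exact: measurable_cst.
    apply/measurable_EFinP; exact: measurable_indic.
  move=> u _.
  have Eu : measurable [set w | 0 <= u /\ u < Q (X1 w)].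
    have [u0|u0] := pselect (0 <= u).
      have -> : [set w | 0 <= u /\ u < Q (X1 w)] = setT `&` (Q \o X1) @^-1` `]u, +oo[.
        apply/seteqP; split => w /=; rewrite in_itv /= andbT.
          by case.
        by move=> [_ H].
      by apply: mQX.
    have -> : [set w | 0 <= u /\ u < Q (X1 w)] = set0.
      by apply/seteqP; split => // w [H _].
    exact: measurable0.
  rewrite (eq_integral (fun w => (Pinv Q u)%:E * (\1_[set w | 0 <= u /\ u < Q (X1 w)] w)%:E)%E); last first.
    by move=> w _; rewrite /f -EFinM.
  rewrite ge0_integralZl //; last by rewrite lee_fin Pinv_ge0.
  2: by apply/measurable_EFinP; exact: measurable_indic.
  rewrite integral_indic // setIT.
  have [[w0 [u0 uQ]]|ne] := pselect (exists w, 0 <= u /\ u < Q (X1 w)).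
    have /andP[_ Q1] := Q01 _ (X1ge0 w0).
    rewrite indicE mem_set; last by rewrite /= in_itv /= u0 (lt_le_trans uQ).
    rewrite mule1; apply: le_trans (Rev1_ub P X1 (Pinv_ge0 Q u)).
    apply: lee_wpmul2l; first by rewrite lee_fin Pinv_ge0.
    apply: le_measure; rewrite ?inE //.
      have -> : [set w | (Pinv Q u <= X1 w)%R] = setT `&` X1 @^-1` `[Pinv Q u, +oo[.
        apply/seteqP; split => w /=; rewrite in_itv /= andbT //.
        by case.
      have mX := @measurable_funPT _ _ _ _ X1.
      by apply: mX.
    by move=> w [_ uw]; apply: Pinv_le.
  have -> : [set w | 0 <= u /\ u < Q (X1 w)] = set0.
    by apply/seteqP; split => // w H; apply: ne; exists w.
  rewrite measure0 mule0; apply: mule_ge0; first exact: Rev1_ge0.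
  by rewrite lee_fin.
apply: (le_trans step3).
rewrite ge0_integralZl //; last exact: Rev1_ge0.
2: by apply/measurable_EFinP; exact: measurable_indic.
rewrite integral_indic // setIT.
change (Rev1 P X1 * lebesgue_measure (`[0%R, 1%R[%classic : set R) <= Rev1 P X1)%E.
by rewrite lebesgue_measure_itv /= lte_fin ltr01 -EFinB subr0 mule1.
Qed.


Lemma indep_fubini2 (R : realType) (d : measure_display) (T : measurableType d)
  (P : probability T R) (X1 X2 : {mfun T >-> R})
  (indep : indep2 P X1 X2) (h : R * R -> \bar R)
  (mh : measurable_fun setT h) (h0 : forall x, (0 <= h x)%E) :
  (\int[P]_w h (X1 w, X2 w) =
   \int[distribution P X2]_y \int[distribution P X1]_x h (x, y))%E.
Proof.
have mXY : measurable_fun setT (fun w => (X1 w, X2 w)).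
  by apply/measurable_fun_pairP; split.
pose XY : {mfun T >-> (R * R)%type} := HB.pack (fun w => (X1 w, X2 w))
  (isMeasurableFun.Build _ _ _ _ (fun w => (X1 w, X2 w)) mXY).
have -> : (\int[P]_w h (X1 w, X2 w) = \int[distribution P XY]_z h z)%E.
  by rewrite ge0_integral_distribution.
rewrite (eq_measure_integral (distribution P X1 \x distribution P X2)%E); last first.
  move=> A mA _; apply/esym; apply: product_measure_unique => //.
by rewrite fubini_tonelli2.
Qed.

Lemma mech_section (R : realType) (q1 q2 s : R * R -> R)
  (H : IC_IR_mechanism q1 q2 s) y : 0 <= y ->
  mech1 (fun z => q1 (z, y)) (fun z => s (z, y) - q2 (z, y) * y).
Proof.
move=> y0; case: H => _ B IR IC; split.
- by move=> z z0; have [] := B (z, y) (conj z0 y0).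
- move=> z z0; have := IR (z, y) (conj z0 y0); rewrite /payoff /=; lra.
- move=> a z a0 z0; have := IC (z, y) (a, y) (conj z0 y0) (conj a0 y0).
  rewrite /payoff /=; lra.
Qed.

Lemma int_dist_le (R : realType) (d : measure_display) (T : measurableType d)
  (P : probability T R) (X2 : {mfun T >-> R}) (F : R -> \bar R) (K : \bar R) :
  measurable_fun setT F -> (forall y, (0 <= F y)%E) -> (0 <= K)%E ->
  (forall y, (F y <= K)%E) -> (\int[distribution P X2]_y F y <= K)%E.
Proof.
move=> mF F0 K0 FK.
have -> : K = (\int[distribution P X2]_y cst K y)%E.
  rewrite integral_cst // [X in (K * X)%E](_ : _ = 1%:E) ?mule1 //; exact: probability_setT.
apply: ge0_le_integral => //; exact: measurable_cst.
Qed.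

Lemma half (R : realType) (d : measure_display) (T : measurableType d)
  (P : probability T R) (X1 X2 : {mfun T >-> R})
  (X1ge0 : forall w, 0 <= X1 w) (X2ge0 : forall w, 0 <= X2 w)
  (indep : indep2 P X1 X2) (q1 q2 s : R * R -> R)
  (H : IC_IR_mechanism q1 q2 s) (c : R) (c0 : 0 < c) :
  (\int[P]_w ((Num.max (s (X1 w, X2 w)) 0) *
        \1_[set x : R * R | x.2 <= c * x.1] (X1 w, X2 w))%:E
   <= (1 + c)%:E * Rev1 P X1)%E.
Proof.
have Hc := H; case: Hc => [[mq1 [mq2 ms]] B IR IC].
set A := [set x : R * R | x.2 <= c * x.1].
have mA : measurable A.
  rewrite -[A]setTI.
  apply: (@measurable_fun_ler _ _ _ setT (fun x : R * R => x.2) (fun x => c * x.1) _ _ measurableT) => //.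
    exact: measurable_snd.
  apply: measurable_funM; first exact: measurable_cst.
  exact: measurable_fst.
set Z := [set x : R * R | 0 <= x.2].
have mZ : measurable Z.
  rewrite -[Z]setTI.
  by apply: (@measurable_fun_ler _ _ _ setT (fun x : R * R => 0) (fun x => x.2) (measurable_cst _) measurable_snd measurableT).
set ZA := [set x : R * R | 0 <= x.2 /\ x.2 <= c * x.1].
have mZA : measurable ZA by have -> : ZA = Z `&` A by [] ; exact: measurableI.
pose h1 := fun x : R * R => (Num.max (s x - q2 x * x.2) 0 * \1_Z x)%:E.
pose h2 := fun x : R * R => (x.2 * \1_ZA x)%:E.
have mh1 : measurable_fun setT h1.
  apply/measurable_EFinP; apply: measurable_funM; last exact: measurable_indic.
  apply: measurable_maxr; last exact: measurable_cst.
  apply: measurable_funB => //; apply: measurable_funM => //; exact: measurable_snd.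
have mh2 : measurable_fun setT h2.
  apply/measurable_EFinP; apply: measurable_funM; last exact: measurable_indic.
  exact: measurable_snd.
have h10 x : (0 <= h1 x)%E by rewrite lee_fin mulr_ge0 // le_max lexx orbT.
have h20 x : (0 <= h2 x)%E.
  rewrite lee_fin /h2 indicE; case: (boolP (x \in ZA)) => [/set_mem [x0 _]|_] /=.
    by rewrite mulr1.
  by rewrite mulr0.
have mX : measurable_fun setT (fun w => (X1 w, X2 w)).
  by apply/measurable_fun_pairP; split.
have step1 : (\int[P]_w ((Num.max (s (X1 w, X2 w)) 0) * \1_A (X1 w, X2 w))%:E <=
    \int[P]_w (h1 (X1 w, X2 w) + h2 (X1 w, X2 w)))%E.
  apply: ge0_le_integral => //.
  - move=> w _; rewrite lee_fin mulr_ge0 //; first by rewrite le_max lexx orbT.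
  - apply/measurable_EFinP; apply: measurable_funM.
      apply: measurable_maxr; last exact: measurable_cst.
      exact: measurableT_comp ms mX.
    apply: measurableT_comp mX; exact: measurable_indic.
  - apply: emeasurable_funD.
      exact: measurableT_comp mh1 mX.
    exact: measurableT_comp mh2 mX.
  move=> w _; rewrite /h1 /h2 -EFinD lee_fin !indicE.
  have x10 := X1ge0 w; have x20 := X2ge0 w.
  have /andP[q20 q21] : 0 <= q2 (X1 w, X2 w) <= 1 by have [] := B (X1 w, X2 w) (conj x10 x20).
  have -> : ((X1 w, X2 w) \in Z) = true by apply/mem_set.
  case: (boolP ((X1 w, X2 w) \in A)) => [/set_mem xA|_] /=.
    have -> : ((X1 w, X2 w) \in ZA) = true by apply/mem_set.
    rewrite !mulr1 ge_max; apply/andP; split.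
      set m := Num.max _ _.
      have hm : s (X1 w, X2 w) - q2 (X1 w, X2 w) * X2 w <= m by rewrite le_max lexx.
      have hq : q2 (X1 w, X2 w) * X2 w <= X2 w by nra.
      lra.
    by apply: addr_ge0 => //; rewrite le_max lexx orbT.
  rewrite mulr0 mulr1; apply: addr_ge0; first by rewrite le_max lexx orbT.
  by case: (boolP (_ \in ZA)) => _ /=; rewrite ?mulr1 ?mulr0.
apply: (le_trans step1).
rewrite ge0_integralD //; last 2 first.
- exact: measurableT_comp mh1 mX.
- exact: measurableT_comp mh2 mX.
rewrite EFinD ge0_muleDl ?mul1e ?Rev1_ge0 //; last by rewrite lee_fin ltW.
apply: leeD.
- rewrite (indep_fubini2 indep mh1 h10).
  apply: int_dist_le.
  + exact: (measurable_fun_fubini_tonelli_G (m1 := distribution P X1) h1 mh1 h10).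
  + by move=> y; apply: integral_ge0 => x _.
  + exact: Rev1_ge0.
  move=> y; rewrite ge0_integral_distribution //; last first.
    exact: (measurable_fun_pair1 y mh1).
  have [y0|y0] := pselect (0 <= y).
    have -> : (\int[P]_x (h1 \o (pair^~ y) \o X1) x =
        \int[P]_w (Num.max ((fun z => s (z, y) - q2 (z, y) * y) (X1 w)) 0)%:E)%E.
      apply: eq_integral => w _; rewrite /h1 /= indicE.
      have -> : ((X1 w, y) \in Z) = true by apply/mem_set.
      by rewrite mulr1.
    apply: (@one_dim _ _ _ P X1 X1ge0 (fun z => q1 (z, y)) (fun z => s (z, y) - q2 (z, y) * y)).
    + exact: (measurable_fun_pair1 y mq1).
    + apply: measurable_funB; first exact: (measurable_fun_pair1 y ms).
      apply: measurable_funM; first exact: (measurable_fun_pair1 y mq2).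
      exact: measurable_cst.
    + exact: mech_section.
  have -> : (\int[P]_x (h1 \o (pair^~ y) \o X1) x = \int[P]_w 0)%E.
    apply: eq_integral => w _; rewrite /h1 /= indicE.
    by rewrite memNset ?mulr0.
  by rewrite integral0 Rev1_ge0.
- rewrite (indep_fubini2 indep mh2 h20).
  apply: int_dist_le.
  + exact: (measurable_fun_fubini_tonelli_G (m1 := distribution P X1) h2 mh2 h20).
  + by move=> y; apply: integral_ge0 => x _.
  + by rewrite mule_ge0 ?Rev1_ge0 // lee_fin ltW.
  move=> y; rewrite ge0_integral_distribution //; last first.
    exact: (measurable_fun_pair1 y mh2).
  have [y0|y0] := pselect (0 <= y).
    have -> : (\int[P]_x (h2 \o (pair^~ y) \o X1) x =
        \int[P]_w (y%:E * (\1_[set w | (y / c) <= X1 w] w)%:E))%E.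
      apply: eq_integral => w _; rewrite /h2 /= !indicE -EFinM.
      congr (_ * _%:R)%:E; congr nat_of_bool.
      apply/idP/idP => /set_mem Hw; apply/mem_set; move: Hw => /=.
        by case=> _ Hc; rewrite ler_pdivrMr // mulrC.
      by rewrite ler_pdivrMr // mulrC => Hc; split.
    have mS : measurable [set w | (y / c <= X1 w)%R].
      have -> : [set w | (y / c <= X1 w)%R] = setT `&` X1 @^-1` `[y / c, +oo[.
        apply/seteqP; split => w /=; rewrite in_itv /= andbT //.
        by case.
      have mX1 := @measurable_funPT _ _ _ _ X1.
      by apply: mX1.
    rewrite ge0_integralZl //; last first.
      by apply/measurable_EFinP; exact: measurable_indic.
    rewrite integral_indic // setIT.
    have -> : y%:E = (c%:E * (y / c)%:E)%E.
      by rewrite -EFinM mulrC divfK // gt_eqF.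
    rewrite -muleA; apply: lee_wpmul2l; first by rewrite lee_fin ltW.
    apply: Rev1_ub; exact: divr_ge0 y0 (ltW c0).
  have -> : (\int[P]_x (h2 \o (pair^~ y) \o X1) x = \int[P]_w 0)%E.
    apply: eq_integral => w _; rewrite /h2 /= indicE.
    by rewrite memNset ?mulr0 // => -[].
  by rewrite integral0 mule_ge0 ?Rev1_ge0 // lee_fin ltW.
Qed.


Lemma real_final (R : realType) (a b e : R) : 0 <= a -> 0 <= b ->
  (forall c : R, 0 < c -> e <= (1 + c) * a + (1 + c^-1) * b) ->
  e <= (Num.sqrt a + Num.sqrt b) ^+ 2.
Proof.
move=> a0 b0 H; set A := Num.sqrt a; set B := Num.sqrt b.
have A0 : 0 <= A by apply: sqrtr_ge0.
have B0 : 0 <= B by apply: sqrtr_ge0.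
have aA : a = A ^+ 2 by rewrite sqr_sqrtr.
have bB : b = B ^+ 2 by rewrite sqr_sqrtr.
apply/ler_addgt0Pr => eps eps0.
set dl := eps / (A + B + 1).
have dl0 : 0 < dl by rewrite divr_gt0 // ltr_wpDl // addr_ge0.
have dle : dl * (A + B) <= eps.
  have K0 : 0 < A + B + 1 by rewrite ltr_wpDl // addr_ge0.
  by rewrite /dl mulrAC ler_pdivrMr // ler_pM2l // lerDl.
set u := A + dl; set v := B + dl.
have u0 : 0 < u by rewrite /u ltr_wpDl.
have v0 : 0 < v by rewrite /v ltr_wpDl.
have c0 : 0 < v / u by rewrite divr_gt0.
have := H _ c0; rewrite invf_div.
have h1 : A ^+ 2 / u <= A by rewrite ler_pdivrMr //; rewrite /u; nra.
have h2 : B ^+ 2 / v <= B by rewrite ler_pdivrMr //; rewrite /v; nra.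
have e1 : v / u * a = v * (A ^+ 2 / u) by rewrite aA mulrAC -mulrA.
have e2 : u / v * b = u * (B ^+ 2 / v) by rewrite bB mulrAC -mulrA.
have h1' : v * (A ^+ 2 / u) <= v * A by rewrite ler_pM2l.
have h2' : u * (B ^+ 2 / v) <= u * B by rewrite ler_pM2l.
have := H _ c0; rewrite invf_div (mulrDl 1 (v / u)) (mulrDl 1 (u / v)) !mul1r e1 e2 => He.
have ex : v * A + u * B = 2 * A * B + dl * (A + B) by rewrite /u /v; ring.
have sq : (A + B) ^+ 2 = A ^+ 2 + B ^+ 2 + 2 * A * B by ring.
move: He h1' h2' dle ex sq; rewrite aA bB.
set X := v * _; set Y := u * _; set Z1 := v * A; set Z2 := u * B; set W := dl * _.
set AB := 2 * A * B; set S := (A + B) ^+ 2.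
move=> *; lra.
Qed.

Lemma mech_swap (R : realType) (q1 q2 s : R * R -> R) :
  IC_IR_mechanism q1 q2 s ->
  IC_IR_mechanism (fun x => q2 (x.2, x.1)) (fun x => q1 (x.2, x.1))
                  (fun x => s (x.2, x.1)).
Proof.
case=> [[mq1 [mq2 ms]] B IR IC].
have msw : measurable_fun setT (fun x : R * R => (x.2, x.1)).
  by apply/measurable_fun_pairP; split; [exact: measurable_snd|exact: measurable_fst].
split.
- split; first exact: (measurableT_comp mq2 msw).
  split; first exact: (measurableT_comp mq1 msw).
  exact: (measurableT_comp ms msw).
- move=> x [x1 x2]; have [] := B (x.2, x.1) (conj x2 x1); by split.
- move=> x [x1 x2]; have := IR (x.2, x.1) (conj x2 x1); rewrite /payoff /=; lra.
- move=> x y [x1 x2] [y1 y2].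
  have := IC (x.2, x.1) (y.2, y.1) (conj x2 x1) (conj y2 y1); rewrite /payoff /=; lra.
Qed.

Lemma indep_swap (R : realType) (d : measure_display) (T : measurableType d)
  (P : probability T R) (X1 X2 : T -> R) :
  indep2 P X1 X2 -> indep2 P X2 X1.
Proof. by move=> H A B mA mB; rewrite setIC H // muleC. Qed.

Lemma ereal_final (R : realType) (E r1 r2 : \bar R) :
  (0 <= r1)%E -> (0 <= r2)%E ->
  (forall c : R, (0 < c)%R -> E <= (1 + c)%:E * r1 + (1 + c^-1)%:E * r2)%E ->
  (E <= (esqrt r1 + esqrt r2) ^+ 2)%E.
Proof.
case: r1 => [a| |] //; case: r2 => [b| |] //; rewrite ?lee_fin => a0 b0 H; rewrite /esqrt.
- case: E H => [e| |] H.
  + rewrite -EFinD expe2 -EFinM lee_fin -expr2; apply: real_final => //.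
  + by have := H 1 ltr01; rewrite -!EFinM -EFinD leye_eq.
  + by rewrite leNye.
- by rewrite addey // expe2 mulyy leey.
- by rewrite addye // expe2 mulyy leey.
- by rewrite addye // expe2 mulyy leey.
Qed.


Unset Implicit Arguments.

Theorem proposition7 (R : realType) (d : measure_display) (T : measurableType d)
  (P : probability T R) (X1 X2 : T -> R)
  (mX1 : measurable_fun setT X1) (mX2 : measurable_fun setT X2)
  (X1ge0 : forall w, 0 <= X1 w) (X2ge0 : forall w, 0 <= X2 w)
  (indep : indep2 P X1 X2) :
  (Rev2 P X1 X2 <= (esqrt (Rev1 P X1) + esqrt (Rev1 P X2)) ^+ 2)%E.
Proof.
pose Y1 : {mfun T >-> R} := HB.pack X1 (isMeasurableFun.Build _ _ _ _ X1 mX1).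
pose Y2 : {mfun T >-> R} := HB.pack X2 (isMeasurableFun.Build _ _ _ _ X2 mX2).
have indY : indep2 P Y1 Y2 by [].
have Y1ge0 : forall w, 0 <= Y1 w by [].
have Y2ge0 : forall w, 0 <= Y2 w by [].
apply: ge_ereal_sup => _ [q1 [q2 [s [H ->]]]].
apply: ereal_final; [exact: Rev1_ge0|exact: Rev1_ge0|] => c c0.
have mXY : measurable_fun setT (fun w => (X1 w, X2 w)).
  by apply/measurable_fun_pairP; split.
have [[mq1 [mq2 ms]] _ _ _] := H.
have msX : measurable_fun setT (fun w => s (X1 w, X2 w)) by exact: measurableT_comp ms mXY.
set A := [set x : R * R | x.2 <= c * x.1].
set B := [set x : R * R | x.1 <= c^-1 * x.2].
have mA : measurable A.
  rewrite -[A]setTI.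
  apply: (@measurable_fun_ler _ _ _ setT (fun x : R * R => x.2) (fun x => c * x.1) _ _ measurableT) => //.
    exact: measurable_snd.
  apply: measurable_funM; first exact: measurable_cst.
  exact: measurable_fst.
have mB : measurable B.
  rewrite -[B]setTI.
  apply: (@measurable_fun_ler _ _ _ setT (fun x : R * R => x.1) (fun x => c^-1 * x.2) _ _ measurableT) => //.
    exact: measurable_fst.
  apply: measurable_funM; first exact: measurable_cst.
  exact: measurable_snd.
have mpos : measurable_fun setT (fun w => Num.max (s (X1 w, X2 w)) 0).
  by apply: measurable_maxr => //; exact: measurable_cst.
have step1 : (\int[P]_w (s (X1 w, X2 w))%:E <=
              \int[P]_w (Num.max (s (X1 w, X2 w)) 0)%:E)%E.
  rewrite integralE.
  rewrite [X in (_ <= X)%E](_ : _ = (\int[P]_w ((fun w => (s (X1 w, X2 w))%:E)^\+ w) - 0)%E); last first.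
    rewrite sube0; apply: eq_integral => w _.
    by rewrite funeposE -EFin_max.
  apply: leeB => //; apply: integral_ge0 => w _; exact: funeneg_ge0.
apply: (le_trans step1).
have step2 : (\int[P]_w (Num.max (s (X1 w, X2 w)) 0)%:E <=
   \int[P]_w ((Num.max (s (X1 w, X2 w)) 0 * \1_A (X1 w, X2 w))%:E +
              (Num.max (s (X1 w, X2 w)) 0 * \1_B (X1 w, X2 w))%:E))%E.
  apply: ge0_le_integral => //.
  - by move=> w _; rewrite lee_fin le_max lexx orbT.
  - exact/measurable_EFinP.
  - apply: emeasurable_funD; apply/measurable_EFinP; apply: measurable_funM => //;
      apply: measurableT_comp mXY; exact: measurable_indic.
  move=> w _; rewrite -EFinD lee_fin !indicE.
  have m0 : 0 <= Num.max (s (X1 w, X2 w)) 0 by rewrite le_max lexx orbT.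
  case: (boolP ((X1 w, X2 w) \in A)) => [_|/negP nA] /=.
    rewrite mulr1 lerDl; case: (_ \in B) => /=; by rewrite ?mulr1 ?mulr0.
  have -> : ((X1 w, X2 w) \in B) = true.
    apply/mem_set; rewrite /B /= mulrC ler_pdivlMr //.
    have : ~ (X2 w <= c * X1 w) by move=> H'; apply: nA; apply/mem_set.
    by move/negP; rewrite -ltNge mulrC => /ltW.
  by rewrite mulr0 mulr1 add0r.
apply: (le_trans step2).
rewrite ge0_integralD //; last 4 first.
- by move=> w _; rewrite lee_fin mulr_ge0 // le_max lexx orbT.
- apply/measurable_EFinP; apply: measurable_funM => //.
  apply: measurableT_comp mXY; exact: measurable_indic.
- by move=> w _; rewrite lee_fin mulr_ge0 // le_max lexx orbT.
- apply/measurable_EFinP; apply: measurable_funM => //.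
  apply: measurableT_comp mXY; exact: measurable_indic.
apply: leeD.
  exact: (half Y1ge0 Y2ge0 indY H c0).
have ci : 0 < c^-1 by rewrite invr_gt0.
have := half Y2ge0 Y1ge0 (indep_swap indY) (mech_swap H) ci.
by [].
Qed.
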